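(* In a pre-Hilbert $*$-category: (i) every isometry is contractive; (ii) if $f\colon X\to Y$ and $g\colon Y\to Z$ are contractive, then $gf$ is contractive; (iii) if $f$ is contractive, then $f^*$ is contractive.
   Context: A $*$-category is a category with a choice of $f^*\colon Y\to X$ for each $f\colon X\to Y$ such that $1^*=1$, $(gf)^*=f^*g^*$, $(f^* )^*=f$; $f$ is an isometry if $f^*f=1$. A pre-Hilbert $*$-category is a $*$-category with (R1) a zero object, (R2) orthonormal biproducts of all pairs of objects (biproducts $(X,s_1,r_1,s_2,r_2)$ with $r_k=s_k^*$), (R3) an isometric kernel for every morphism, and (R4) every diagonal $\Delta\colon X\to X\oplus X$ a kernel of some morphism. Such a category is additive. For Hermitian endomorphisms $a,b\colon A\to A$ (i.e. $a^*=a$, $b^*=b$), $a\leq b$ means $b-a=y^*y$ for some object $Y$ and some $y\colon A\to Y$. A morphism $f$ is contractive (a contraction) if $f^*f\leq 1$. *)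

(* Defs.v *)
Set Implicit Arguments.
Unset Strict Implicit.

Record Category := {
  Ob :> Type;
  Hom : Ob -> Ob -> Type;
  comp : forall {X Y Z : Ob}, Hom Y Z -> Hom X Y -> Hom X Z;
  idm : forall X : Ob, Hom X X;
  comp_assoc : forall (W X Y Z : Ob) (h : Hom Y Z) (g : Hom X Y) (f : Hom W X),
      comp h (comp g f) = comp (comp h g) f;
  comp_id_l : forall (X Y : Ob) (f : Hom X Y), comp (idm Y) f = f;
  comp_id_r : forall (X Y : Ob) (f : Hom X Y), comp f (idm X) = f
}.

Arguments Hom {c} _ _.
Arguments comp {c X Y Z} _ _.
Arguments idm {c} X.

Record StarCategory := {
  scat :> Category;
  star : forall {X Y : scat}, Hom X Y -> Hom Y X;
  star_id : forall X : scat, star (idm X) = idm X;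
  star_comp : forall (X Y Z : scat) (f : Hom X Y) (g : Hom Y Z),
      star (comp g f) = comp (star f) (star g);
  star_star : forall (X Y : scat) (f : Hom X Y), star (star f) = f
}.

Arguments star {s X Y} _.

Section Notions.
Variable C : StarCategory.

Definition isometry {X Y : C} (f : Hom X Y) : Prop := comp (star f) f = idm X.

Definition hermitian {X : C} (a : Hom X X) : Prop := star a = a.

Definition is_zero_object (O : C) : Prop :=
  (forall X : C, (exists f : Hom X O, True) /\ forall f g : Hom X O, f = g) /\
  (forall X : C, (exists f : Hom O X, True) /\ forall f g : Hom O X, f = g).

Definition is_zero_morphism (O : C) {X Y : C} (f : Hom X Y) : Prop :=
  exists (u : Hom X O) (v : Hom O Y), f = comp v u.

(** Orthonormal biproduct (B, s1, r1, s2, r2) of X1 and X2 with r_k = s_k^*: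
    (B, r1, r2) is a product, (B, s1, s2) a coproduct, and r_j s_k = delta_jk. *)
Definition is_orth_biproduct (O : C) (X1 X2 B : C)
    (s1 : Hom X1 B) (s2 : Hom X2 B) : Prop :=
  comp (star s1) s1 = idm X1 /\ comp (star s2) s2 = idm X2 /\
  is_zero_morphism O (comp (star s2) s1) /\ is_zero_morphism O (comp (star s1) s2) /\
  (forall (A : C) (f1 : Hom A X1) (f2 : Hom A X2),
      exists h : Hom A B, comp (star s1) h = f1 /\ comp (star s2) h = f2 /\
        forall h' : Hom A B, comp (star s1) h' = f1 -> comp (star s2) h' = f2 -> h' = h) /\
  (forall (A : C) (g1 : Hom X1 A) (g2 : Hom X2 A),
      exists h : Hom B A, comp h s1 = g1 /\ comp h s2 = g2 /\
        forall h' : Hom B A, comp h' s1 = g1 -> comp h' s2 = g2 -> h' = h).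

Definition is_kernel (O : C) {K X Y : C} (k : Hom K X) (f : Hom X Y) : Prop :=
  is_zero_morphism O (comp f k) /\
  forall (A : C) (h : Hom A X), is_zero_morphism O (comp f h) ->
    exists u : Hom A K, comp k u = h /\ forall u' : Hom A K, comp k u' = h -> u' = u.

End Notions.

(** * Pre-Hilbert *-categories (R1)-(R4).  The zero object and a choice of
    orthonormal biproduct for each pair of objects are carried as data. *)
Record PreHilbertCategory := {
  phstar :> StarCategory;
  zobj : phstar;
  zobj_zero : is_zero_object zobj;
  bprod : phstar -> phstar -> phstar;
  bin1 : forall X Y : phstar, Hom X (bprod X Y);
  bin2 : forall X Y : phstar, Hom Y (bprod X Y);
  bprod_orth : forall X Y : phstar,
      is_orth_biproduct zobj (bin1 X Y) (bin2 X Y);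
  isometric_kernels : forall (X Y : phstar) (f : Hom X Y),
      exists (K : phstar) (k : Hom K X), isometry k /\ is_kernel zobj k f;
  diagonal_kernels : forall (X : phstar) (d : Hom X (bprod X X)),
      comp (star (bin1 X X)) d = idm X -> comp (star (bin2 X X)) d = idm X ->
      exists (Z : phstar) (g : Hom (bprod X X) Z), is_kernel zobj d g
}.

Section Order.
Variable C : PreHilbertCategory.

(** The canonical (biproduct-induced) sum of morphisms: [h = f + g] iff
    h = nabla o <f, g> where <f,g> : A -> B(+)B is the pairing and
    nabla : B(+)B -> B the codiagonal. *)
Definition is_sum {A B : C} (f g h : Hom A B) : Prop :=
  exists (p : Hom A (bprod B B)) (q : Hom (bprod B B) B),
    comp (star (bin1 B B)) p = f /\ comp (star (bin2 B B)) p = g /\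
    comp q (bin1 B B) = idm B /\ comp q (bin2 B B) = idm B /\
    h = comp q p.

(** For Hermitian a, b : A -> A, a <= b iff b - a = y^* y for some y : A -> Y,
    i.e. (the category being additive) b = a + y^* y. *)
Definition hle {A : C} (a b : Hom A A) : Prop :=
  hermitian a /\ hermitian b /\
  exists (Y : C) (y : Hom A Y), is_sum a (comp (star y) y) b.

Definition contractive {X Y : C} (f : Hom X Y) : Prop :=
  hle (comp (star f) f) (idm X).

End Order.

(* Main.v *)
Require Import Defs.
From Stdlib Require Import ClassicalEpsilon.

Section Dev.
Variable C : PreHilbertCategory.
Local Notation O := (zobj C).
Local Notation "g ∘ f" := (comp g f) (at level 40, left associativity).
Local Notation s1 := (bin1 _ _).
Local Notation s2 := (bin2 _ _).

Definition toO (X : C) : Hom X O :=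
  proj1_sig (constructive_indefinite_description (fun _ => True) (proj1 (proj1 (zobj_zero C) X))).
Definition fromO (X : C) : Hom O X :=
  proj1_sig (constructive_indefinite_description (fun _ => True) (proj1 (proj2 (zobj_zero C) X))).
Definition zero (X Y : C) : Hom X Y := fromO Y ∘ toO X.
Arguments zero {X Y}.

Lemma toO_u {X : C} (f g : Hom X O) : f = g.
Proof. exact (proj2 (proj1 (zobj_zero C) X) f g). Qed.
Lemma fromO_u {X : C} (f g : Hom O X) : f = g.
Proof. exact (proj2 (proj2 (zobj_zero C) X) f g). Qed.

Lemma zero_is (X Y : C) (f : Hom X Y) : is_zero_morphism O f -> f = zero.
Proof. intros [u [v ->]]. unfold zero. rewrite (toO_u u (toO X)), (fromO_u v (fromO Y)). reflexivity. Qed.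
Lemma zero_isz (X Y : C) : is_zero_morphism O (@zero X Y).
Proof. exists (toO X), (fromO Y). reflexivity. Qed.

Lemma zero_l (X Y Z : C) (f : Hom X Y) : (@zero Y Z) ∘ f = zero.
Proof. unfold zero. rewrite <- comp_assoc. rewrite (toO_u (toO Y ∘ f) (toO X)). reflexivity. Qed.
Lemma zero_r (X Y Z : C) (f : Hom Y Z) : f ∘ (@zero X Y) = zero.
Proof. unfold zero. rewrite comp_assoc. rewrite (fromO_u (f ∘ fromO Y) (fromO Z)). reflexivity. Qed.
Lemma star_zero (X Y : C) : star (@zero X Y) = zero.
Proof. unfold zero. rewrite star_comp. rewrite (toO_u (star (fromO Y)) (toO Y)), (fromO_u (star (toO X)) (fromO X)). reflexivity. Qed.

Section BP.
Variables X Y : C.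
Lemma r1s1 : star (bin1 X Y) ∘ bin1 X Y = idm X.
Proof. destruct (bprod_orth X Y) as [H _]; exact H. Qed.
Lemma r2s2 : star (bin2 X Y) ∘ bin2 X Y = idm Y.
Proof. destruct (bprod_orth X Y) as [_ [H _]]; exact H. Qed.
Lemma r2s1 : star (bin2 X Y) ∘ bin1 X Y = zero.
Proof. destruct (bprod_orth X Y) as [_ [_ [H _]]]; apply zero_is, H. Qed.
Lemma r1s2 : star (bin1 X Y) ∘ bin2 X Y = zero.
Proof. destruct (bprod_orth X Y) as [_ [_ [_ [H _]]]]; apply zero_is, H. Qed.

Definition pair {A : C} (f1 : Hom A X) (f2 : Hom A Y) : Hom A (bprod X Y) :=
  proj1_sig (constructive_indefinite_description _
    (proj1 (proj2 (proj2 (proj2 (proj2 (bprod_orth X Y))))) A f1 f2)).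
Lemma pair_spec {A : C} (f1 : Hom A X) (f2 : Hom A Y) :
  star (bin1 X Y) ∘ pair f1 f2 = f1 /\ star (bin2 X Y) ∘ pair f1 f2 = f2 /\
  forall h', star (bin1 X Y) ∘ h' = f1 -> star (bin2 X Y) ∘ h' = f2 -> h' = pair f1 f2.
Proof. unfold pair. destruct constructive_indefinite_description. exact a. Qed.
Lemma pair1 {A : C} (f1 : Hom A X) (f2 : Hom A Y) : star (bin1 X Y) ∘ pair f1 f2 = f1.
Proof. apply pair_spec. Qed.
Lemma pair2 {A : C} (f1 : Hom A X) (f2 : Hom A Y) : star (bin2 X Y) ∘ pair f1 f2 = f2.
Proof. apply pair_spec. Qed.
Lemma into_ext {A : C} (h h' : Hom A (bprod X Y)) :
  star (bin1 X Y) ∘ h = star (bin1 X Y) ∘ h' -> star (bin2 X Y) ∘ h = star (bin2 X Y) ∘ h' -> h = h'.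
Proof. intros E1 E2. destruct (pair_spec (star (bin1 X Y) ∘ h') (star (bin2 X Y) ∘ h')) as [_ [_ U]].
  rewrite (U h E1 E2). symmetry. apply U; reflexivity. Qed.

Definition copair {A : C} (g1 : Hom X A) (g2 : Hom Y A) : Hom (bprod X Y) A :=
  proj1_sig (constructive_indefinite_description _
    (proj2 (proj2 (proj2 (proj2 (proj2 (bprod_orth X Y))))) A g1 g2)).
Lemma copair_spec {A : C} (g1 : Hom X A) (g2 : Hom Y A) :
  copair g1 g2 ∘ bin1 X Y = g1 /\ copair g1 g2 ∘ bin2 X Y = g2 /\
  forall h', h' ∘ bin1 X Y = g1 -> h' ∘ bin2 X Y = g2 -> h' = copair g1 g2.
Proof. unfold copair. destruct constructive_indefinite_description. exact a. Qed.
Lemma copair1 {A : C} (g1 : Hom X A) (g2 : Hom Y A) : copair g1 g2 ∘ bin1 X Y = g1.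
Proof. apply copair_spec. Qed.
Lemma copair2 {A : C} (g1 : Hom X A) (g2 : Hom Y A) : copair g1 g2 ∘ bin2 X Y = g2.
Proof. apply copair_spec. Qed.
Lemma out_ext {A : C} (h h' : Hom (bprod X Y) A) :
  h ∘ bin1 X Y = h' ∘ bin1 X Y -> h ∘ bin2 X Y = h' ∘ bin2 X Y -> h = h'.
Proof. intros E1 E2. destruct (copair_spec (h' ∘ bin1 X Y) (h' ∘ bin2 X Y)) as [_ [_ U]].
  rewrite (U h E1 E2). symmetry. apply U; reflexivity. Qed.

Lemma r1s1' {A : C} (f : Hom A X) : star (bin1 X Y) ∘ (bin1 X Y ∘ f) = f.
Proof. rewrite comp_assoc, r1s1, comp_id_l. reflexivity. Qed.
Lemma r2s2' {A : C} (f : Hom A Y) : star (bin2 X Y) ∘ (bin2 X Y ∘ f) = f.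
Proof. rewrite comp_assoc, r2s2, comp_id_l. reflexivity. Qed.
Lemma r2s1' {A : C} (f : Hom A X) : star (bin2 X Y) ∘ (bin1 X Y ∘ f) = zero.
Proof. rewrite comp_assoc, r2s1, zero_l. reflexivity. Qed.
Lemma r1s2' {A : C} (f : Hom A Y) : star (bin1 X Y) ∘ (bin2 X Y ∘ f) = zero.
Proof. rewrite comp_assoc, r1s2, zero_l. reflexivity. Qed.
Lemma pair1' {A Z : C} (f1 : Hom A X) (f2 : Hom A Y) (h : Hom Z A) : star (bin1 X Y) ∘ (pair f1 f2 ∘ h) = f1 ∘ h.
Proof. rewrite comp_assoc, pair1. reflexivity. Qed.
Lemma pair2' {A Z : C} (f1 : Hom A X) (f2 : Hom A Y) (h : Hom Z A) : star (bin2 X Y) ∘ (pair f1 f2 ∘ h) = f2 ∘ h.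
Proof. rewrite comp_assoc, pair2. reflexivity. Qed.
Lemma copair1' {A Z : C} (g1 : Hom X A) (g2 : Hom Y A) (h : Hom Z X) : copair g1 g2 ∘ (bin1 X Y ∘ h) = g1 ∘ h.
Proof. rewrite comp_assoc, copair1. reflexivity. Qed.
Lemma copair2' {A Z : C} (g1 : Hom X A) (g2 : Hom Y A) (h : Hom Z Y) : copair g1 g2 ∘ (bin2 X Y ∘ h) = g2 ∘ h.
Proof. rewrite comp_assoc, copair2. reflexivity. Qed.

Lemma comp_pair {A Z : C} (f1 : Hom A X) (f2 : Hom A Y) (h : Hom Z A) : pair f1 f2 ∘ h = pair (f1 ∘ h) (f2 ∘ h).
Proof. apply into_ext; rewrite comp_assoc; [rewrite pair1, pair1 | rewrite pair2, pair2]; reflexivity. Qed.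
Lemma pair_zero_r {A : C} (f : Hom A X) : pair f zero = bin1 X Y ∘ f.
Proof. apply into_ext. rewrite pair1, r1s1'. reflexivity. rewrite pair2. rewrite comp_assoc, r2s1, zero_l. reflexivity. Qed.
Lemma pair_zero_l {A : C} (f : Hom A Y) : pair zero f = bin2 X Y ∘ f.
Proof. apply into_ext. rewrite pair1, comp_assoc, r1s2, zero_l. reflexivity. rewrite pair2, r2s2'. reflexivity. Qed.
End BP.

Arguments pair {X Y A}. Arguments copair {X Y A}.
Arguments zero {X Y}.

Hint Rewrite <- comp_assoc : cat.
Hint Rewrite comp_id_l comp_id_r zero_l zero_r r1s1 r2s2 r2s1 r1s2 r1s1' r2s2' r2s1' r1s2'
  pair1 pair2 pair1' pair2' copair1 copair2 copair1' copair2' star_zero star_star star_id : cat.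

Definition add {A B : C} (f g : Hom A B) : Hom A B := copair (idm B) (idm B) ∘ pair f g.

Lemma is_sum_add {A B : C} (f g h : Hom A B) : is_sum f g h <-> h = add f g.
Proof. split.
- intros [p [q [E1 [E2 [E3 [E4 ->]]]]]]. unfold add. f_equal.
  + apply out_ext; rewrite ?E3, ?E4; autorewrite with cat; reflexivity.
  + apply into_ext; rewrite ?E1, ?E2; autorewrite with cat; reflexivity.
- intros ->. exists (pair f g), (copair (idm B) (idm B)). autorewrite with cat. repeat split.
Qed.

Lemma matrix {A X Y Z : C} (p : Hom A (bprod X Y)) (c : Hom (bprod X Y) Z) :
  c ∘ p = add ((c ∘ bin1 X Y) ∘ (star (bin1 X Y) ∘ p)) ((c ∘ bin2 X Y) ∘ (star (bin2 X Y) ∘ p)).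
Proof.
  set (D := pair ((c ∘ bin1 X Y) ∘ star (bin1 X Y)) ((c ∘ bin2 X Y) ∘ star (bin2 X Y))).
  assert (E : pair ((c ∘ bin1 X Y) ∘ (star (bin1 X Y) ∘ p)) ((c ∘ bin2 X Y) ∘ (star (bin2 X Y) ∘ p)) = D ∘ p).
  { unfold D. rewrite comp_pair. rewrite !comp_assoc. reflexivity. }
  assert (E2 : copair (idm Z) (idm Z) ∘ D = c).
  { unfold D. apply out_ext; autorewrite with cat; rewrite ?comp_pair; autorewrite with cat.
    - rewrite pair_zero_r. autorewrite with cat. reflexivity.
    - rewrite pair_zero_l. autorewrite with cat. reflexivity. }
  unfold add. rewrite E, comp_assoc, E2. reflexivity.
Qed.

Lemma add_comm {A B : C} (f g : Hom A B) : add f g = add g f.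
Proof.
  unfold add.
  assert (E : pair g f = pair (star (bin2 B B)) (star (bin1 B B)) ∘ pair f g).
  { rewrite comp_pair. autorewrite with cat. reflexivity. }
  assert (E2 : copair (idm B) (idm B) ∘ pair (star (bin2 B B)) (star (bin1 B B)) = copair (idm B) (idm B)).
  { apply out_ext; autorewrite with cat; rewrite ?comp_pair; autorewrite with cat.
    - rewrite pair_zero_l. autorewrite with cat. reflexivity.
    - rewrite pair_zero_r. autorewrite with cat. reflexivity. }
  rewrite E, comp_assoc, E2. reflexivity.
Qed.

Lemma add_zero_r {A B : C} (f : Hom A B) : add f zero = f.
Proof. unfold add. rewrite pair_zero_r. autorewrite with cat. reflexivity. Qed.
Lemma add_zero_l {A B : C} (f : Hom A B) : add zero f = f.
Proof. rewrite add_comm. apply add_zero_r. Qed.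

Lemma comp_add_l {A B D : C} (f g : Hom A B) (k : Hom B D) : k ∘ add f g = add (k ∘ f) (k ∘ g).
Proof. unfold add at 1. rewrite comp_assoc, matrix. autorewrite with cat. reflexivity. Qed.
Lemma comp_add_r {A B D : C} (f g : Hom A B) (m : Hom D A) : add f g ∘ m = add (f ∘ m) (g ∘ m).
Proof. unfold add. rewrite <- comp_assoc, comp_pair. reflexivity. Qed.
Lemma star_add {A B : C} (f g : Hom A B) : star (add f g) = add (star f) (star g).
Proof. unfold add. rewrite star_comp, matrix.
  replace (star (pair f g) ∘ bin1 B B) with (star (star (bin1 B B) ∘ pair f g)) by (rewrite star_comp, star_star; reflexivity).
  replace (star (pair f g) ∘ bin2 B B) with (star (star (bin2 B B) ∘ pair f g)) by (rewrite star_comp, star_star; reflexivity).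
  replace (star (bin1 B B) ∘ star (copair (idm B) (idm B))) with (star (copair (idm B) (idm B) ∘ bin1 B B)) by (rewrite star_comp; reflexivity).
  replace (star (bin2 B B) ∘ star (copair (idm B) (idm B))) with (star (copair (idm B) (idm B) ∘ bin2 B B)) by (rewrite star_comp; reflexivity).
  autorewrite with cat. reflexivity. Qed.

Lemma add_assoc {A B : C} (a b c : Hom A B) : add (add a b) c = add a (add b c).
Proof.
  set (P := pair (pair a b) c).
  set (x := star (bin1 B B) ∘ star (bin1 (bprod B B) B)).
  set (y := star (bin2 B B) ∘ star (bin1 (bprod B B) B)).
  set (z := star (bin2 (bprod B B) B)).
  assert (Ha : a = x ∘ P) by (unfold x, P; autorewrite with cat; reflexivity).
  assert (Hb : b = y ∘ P) by (unfold y, P; autorewrite with cat; reflexivity).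
  assert (Hc : c = z ∘ P) by (unfold z, P; autorewrite with cat; reflexivity).
  rewrite Ha, Hb, Hc, <- !comp_add_r. f_equal.
  unfold x, y, z. apply out_ext; [apply out_ext|]; autorewrite with cat; repeat rewrite comp_add_r;
    autorewrite with cat; rewrite ?add_zero_l, ?add_zero_r; reflexivity.
Qed.

Lemma star_pair1 {A X Y : C} (f1 : Hom A X) (f2 : Hom A Y) : star (pair f1 f2) ∘ bin1 X Y = star f1.
Proof. rewrite <- (pair1 X Y f1 f2) at 2. rewrite star_comp, star_star. reflexivity. Qed.
Lemma star_pair2 {A X Y : C} (f1 : Hom A X) (f2 : Hom A Y) : star (pair f1 f2) ∘ bin2 X Y = star f2.
Proof. rewrite <- (pair2 X Y f1 f2) at 2. rewrite star_comp, star_star. reflexivity. Qed.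

Lemma neg_uniq {A B : C} (u v t : Hom A B) : add u t = zero -> add v t = zero -> u = v.
Proof. intros Hu Hv.
  rewrite <- (add_zero_r u), <- Hv, <- add_assoc, (add_comm u v), add_assoc, Hu, add_zero_r. reflexivity. Qed.

Lemma neg_exists (X : C) : exists m : Hom X X, add (idm X) m = zero.
Proof.
  set (D := @pair X X X (idm X) (idm X)).
  destruct (@diagonal_kernels C X D (pair1 X X _ _) (pair2 X X _ _)) as [Z [g [gD gK]]].
  destruct (isometric_kernels (star D)) as [K [k [kiso [kD kK]]]].
  set (a := star (bin1 X X) ∘ k). set (b := star (bin2 X X) ∘ k).
  assert (Hab : add a b = zero).
  { apply zero_is in kD. rewrite matrix in kD. unfold D in kD. rewrite !star_pair1, !star_pair2, star_id, !comp_id_l in kD.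
    exact kD. }
  assert (Hsa : star k ∘ bin1 X X = star a).
  { unfold a. rewrite star_comp, star_star. reflexivity. }
  assert (Hsb : star k ∘ bin2 X X = star b).
  { unfold b. rewrite star_comp, star_star. reflexivity. }
  assert (Hg : exists u : Hom Z K, g = star u ∘ star k).
  { apply zero_is in gD. assert (E : star D ∘ star g = zero) by (rewrite <- star_comp, gD; apply star_zero).
    destruct (kK _ (star g)) as [u [Hu _]]. rewrite E; apply zero_isz.
    exists u. rewrite <- star_comp, Hu, star_star. reflexivity. }
  destruct Hg as [u Hu].
  assert (Hmono : forall (A : C) (h h' : Hom A X), star a ∘ h = star a ∘ h' -> h = h').
  { intros A h h' E.
    assert (E1 : star k ∘ pair h h' = zero).
    { rewrite matrix. rewrite Hsa, Hsb, pair1, pair2, E, <- comp_add_r, <- star_add, Hab, star_zero, zero_l.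
      reflexivity. }
    destruct (gK _ (pair h h')) as [w [Hw _]].
    { rewrite Hu, <- comp_assoc, E1, zero_r. apply zero_isz. }
    assert (H1 : h = w) by (rewrite <- (pair1 X X h h'), <- Hw; unfold D; autorewrite with cat; reflexivity).
    assert (H2 : h' = w) by (rewrite <- (pair2 X X h h'), <- Hw; unfold D; autorewrite with cat; reflexivity).
    congruence. }
  assert (Hepi : forall (A : C) (x y : Hom X A), x ∘ a = y ∘ a -> x = y).
  { intros A x y E. rewrite <- (star_star x), <- (star_star y). f_equal.
    apply Hmono. rewrite <- !star_comp, E. reflexivity. }
  assert (Hbb : star b ∘ b = star a ∘ a).
  { apply (neg_uniq _ _ (star b ∘ a)).
    - rewrite <- comp_add_l, add_comm, Hab, zero_r. reflexivity.
    - rewrite <- comp_add_r, <- star_add, Hab, star_zero, zero_l. reflexivity. }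
  assert (Hk : add (star a ∘ a) (star b ∘ b) = idm K).
  { rewrite <- kiso. unfold isometry. rewrite (matrix k (star k)), Hsa, Hsb. reflexivity. }
  set (c := add (star a) (star a)).
  assert (Hca : c ∘ a = idm K). { unfold c. rewrite comp_add_r, <- Hk. rewrite Hbb. reflexivity. }
  assert (Hac : a ∘ c = idm X).
  { apply Hepi. rewrite <- comp_assoc, Hca, comp_id_l, comp_id_r. reflexivity. }
  exists (b ∘ c). rewrite <- Hac, <- comp_add_r, Hab, zero_l. reflexivity.
Qed.

Definition mone (X : C) : Hom X X :=
  proj1_sig (constructive_indefinite_description _ (neg_exists X)).
Lemma mone_spec (X : C) : add (idm X) (mone X) = zero.
Proof. unfold mone. destruct constructive_indefinite_description. exact e. Qed.
Lemma mone_nat {X Y : C} (f : Hom X Y) : mone Y ∘ f = f ∘ mone X.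
Proof. apply (neg_uniq _ _ f).
  - rewrite <- (comp_id_l f) at 2. rewrite <- comp_add_r, add_comm, mone_spec, zero_l. reflexivity.
  - rewrite <- (comp_id_r f) at 2. rewrite <- comp_add_l, add_comm, mone_spec, zero_r. reflexivity.
Qed.
Lemma mone_star (X : C) : star (mone X) = mone X.
Proof. apply (neg_uniq _ _ (idm X)).
  - rewrite <- star_id, <- star_add, add_comm, mone_spec, star_zero. reflexivity.
  - rewrite add_comm. apply mone_spec. Qed.
Lemma mone_mone (X : C) : mone X ∘ mone X = idm X.
Proof. apply (neg_uniq _ _ (mone X)).
  - rewrite <- (comp_id_r (mone X)) at 3. rewrite <- comp_add_l, add_comm, mone_spec, zero_r. reflexivity.
  - apply mone_spec. Qed.

Lemma contr_iff {X Y : C} (f : Hom X Y) :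
  contractive f <-> exists (W : C) (w : Hom X W), add (star f ∘ f) (star w ∘ w) = idm X.
Proof. unfold contractive, hle, hermitian. split.
  - intros [_ [_ [W [w H]]]]. exists W, w. symmetry. apply is_sum_add. exact H.
  - intros [W [w H]]. split; [| split].
    + rewrite star_comp, star_star. reflexivity.
    + apply star_id.
    + exists W, w. apply is_sum_add. symmetry. exact H.
Qed.

Lemma part1 {X Y : C} (f : Hom X Y) : isometry f -> contractive f.
Proof. intros H. apply contr_iff. exists O, (toO X).
  rewrite (zero_is _ _ (star (toO X) ∘ toO X)) by (exists (toO X), (star (toO X)); reflexivity).
  rewrite add_zero_r. exact H. Qed.

Lemma part2 {X Y Z : C} (f : Hom X Y) (g : Hom Y Z) :
  contractive f -> contractive g -> contractive (g ∘ f).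
Proof. rewrite !contr_iff. intros [W1 [y H1]] [W2 [z H2]].
  exists (bprod W2 W1), (pair (z ∘ f) y).
  rewrite (matrix (pair (z ∘ f) y) (star (pair (z ∘ f) y))), star_pair1, star_pair2, pair1, pair2.
  rewrite <- add_assoc, <- H1. f_equal.
  rewrite !star_comp.
  transitivity (star f ∘ add (star g ∘ g) (star z ∘ z) ∘ f).
  - rewrite comp_add_l, comp_add_r. autorewrite with cat. reflexivity.
  - rewrite H2. autorewrite with cat. reflexivity.
Qed.

Lemma part3 {X Y : C} (f : Hom X Y) : contractive f -> contractive (star f).
Proof. rewrite !contr_iff. intros [W [w H]].
  set (x := f ∘ star f). set (n := mone Y ∘ x). set (e := add (idm Y) n).
  exists (bprod Y W), (pair e (w ∘ star f)).
  rewrite (matrix (pair e (w ∘ star f)) (star (pair e (w ∘ star f)))), star_pair1, star_pair2, pair1, pair2.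
  rewrite star_star.
  assert (Hx : star x = x) by (unfold x; rewrite star_comp, star_star; reflexivity).
  assert (He : star e = e).
  { unfold e, n. rewrite star_add, star_id, star_comp, Hx, mone_star, mone_nat. reflexivity. }
  assert (Hnx : add x n = zero).
  { unfold n. rewrite <- (comp_id_l x) at 1. rewrite <- comp_add_r, mone_spec, zero_l. reflexivity. }
  assert (Hnn : n ∘ n = x ∘ x).
  { unfold n. rewrite <- comp_assoc, (comp_assoc x), <- mone_nat, comp_assoc, comp_assoc, mone_mone, comp_id_l.
    reflexivity. }
  assert (Hee : e ∘ e = add e (add n (x ∘ x))).
  { unfold e at 1. rewrite comp_add_r, comp_id_l. f_equal. unfold e. rewrite comp_add_l, comp_id_r, Hnn. reflexivity. }
  assert (G : add (x ∘ x) (star (w ∘ star f) ∘ (w ∘ star f)) = x).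
  { transitivity (f ∘ add (star f ∘ f) (star w ∘ w) ∘ star f).
    - rewrite comp_add_l, comp_add_r. unfold x. rewrite star_comp, star_star. autorewrite with cat. reflexivity.
    - rewrite H. unfold x. autorewrite with cat. reflexivity. }
  change (f ∘ star f) with x. rewrite He, Hee.
  rewrite add_assoc, (add_assoc n), G, (add_comm n x), Hnx, add_zero_r.
  unfold e. rewrite (add_comm (idm Y) n), <- add_assoc, Hnx. apply add_zero_l.
Qed.
End Dev.

Theorem proposition7p3 (C : PreHilbertCategory) :
  (forall (X Y : C) (f : Hom X Y), isometry f -> contractive f) /\
  (forall (X Y Z : C) (f : Hom X Y) (g : Hom Y Z),
      contractive f -> contractive g -> contractive (comp g f)) /\
  (forall (X Y : C) (f : Hom X Y), contractive f -> contractive (star f)).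
Proof.
  split; [| split].
  - intros X Y f. apply part1.
  - intros X Y Z f g. apply part2.
  - intros X Y f. apply part3.
Qed.
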